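(* Let $A_0,A_1,\dots,A_n$ be the distance matrices of the hypercube $Q_n$ (real $2^n\times 2^n$ matrices). (i) If $n$ is odd, then $\ker(A_0+A_1)\subseteq\ker(A_{2i}+A_{2i+1})$ for all $i=0,1,\dots,\frac{n-1}{2}$. (ii) If $n\equiv 1\pmod 4$, then $\ker(A_0+A_1)\subseteq\ker(A_i+A_{n-i})$ for all $i=0,1,\dots,\frac{n-1}{2}$.
   Context: $Q_n$ is the hypercube with vertex set $\mathbb{F}_2^n$, two vertices adjacent iff they differ in exactly one coordinate. For $0\le i\le n$, the $i$-distance matrix $A_i$ is the matrix indexed by vertices with $(A_i)_{xy}=1$ if $d(x,y)=i$ and $0$ otherwise; $A_0=I$ and $A_1$ is the adjacency matrix. *)

(* Defs.v *)
From Stdlib Require Import Reals.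
From mathcomp Require Import all_boot all_order all_algebra.
From mathcomp Require Import Rstruct.
Set Implicit Arguments. Unset Strict Implicit. Unset Printing Implicit Defensive.
Import GRing.Theory.
Local Open Scope ring_scope.

Definition hvert (n : nat) := {ffun 'I_n -> bool}.

(* Hamming distance = graph distance in Q_n. *)
Definition hdist (n : nat) (x y : hvert n) : nat := #|[set k | x k != y k]|.

Definition distmx (n i : nat) : 'M[R]_(#|{: hvert n}|) :=
  \matrix_(a, b) (if hdist (enum_val a) (enum_val b) == i then 1 else 0).

Definition in_ker (N : nat) (M : 'M[R]_N) (v : 'cV[R]_N) : Prop := M *m v = 0.

(* Main.v *)
Require Import Defs.
From Stdlib Require Import Reals.
From mathcomp Require Import all_boot all_order all_algebra.
From mathcomp Require Import Rstruct.
From mathcomp Require Import zify ring lra.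
Set Implicit Arguments. Unset Strict Implicit. Unset Printing Implicit Defensive.
Import GRing.Theory Num.Theory.
Local Open Scope ring_scope.

Section Comb.
Variable n : nat.
Implicit Types x y w : hvert n.

Definition flip (l : 'I_n) (w : hvert n) : hvert n :=
  [ffun k => if k == l then ~~ w k else w k].

Lemma flipK l : involutive (flip l).
Proof. by move=> w; apply/ffunP=> k; rewrite !ffunE; case: (k == l) => //; rewrite negbK. Qed.

Lemma hdist0 x y : (hdist x y == 0%N) = (x == y).
Proof.
rewrite /hdist cards_eq0; apply/eqP/eqP => [H|->].
  apply/ffunP=> k; move/setP: H => /(_ k); rewrite !inE.
  by move/negbFE/eqP.
by apply/setP=> k; rewrite !inE eqxx.
Qed.

Lemma hdist_flip x w l : hdist x (flip l w) =
  if x l == w l then (hdist x w).+1 else (hdist x w).-1.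
Proof.
rewrite /hdist; case: ifP => Hl.
  have -> : [set k | x k != flip l w k] = l |: [set k | x k != w k].
    apply/setP=> k; rewrite !inE ffunE; case: (k =P l) => [->|_] //=.
    by move: Hl; case: (x l); case: (w l).
  by rewrite cardsU1 inE Hl.
rewrite (cardsD1 l [set k | x k != w k]) inE Hl /=.
apply: eq_card => k; rewrite !inE ffunE; case: (k =P l) => [->|_] //=.
by move: Hl; case: (x l); case: (w l).
Qed.

Lemma flip_eq w y l : (w == flip l y) = ([set k | y k != w k] == [set l]).
Proof.
apply/eqP/eqP => [->|H].
  by apply/setP=> k; rewrite !inE ffunE; case: (k == l); case: (y k).
apply/ffunP=> k; rewrite ffunE.
move/setP: H => /(_ k); rewrite !inE.
by case: (k == l); case: (y k); case: (w k).
Qed.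

Lemma sum_nbr (g : hvert n -> R) y :
  \sum_w (if hdist y w == 1%N then g w else 0) = \sum_l g (flip l y).
Proof.
transitivity (\sum_l \sum_w (if w == flip l y then g w else 0)); last first.
  by apply: eq_bigr => l _; rewrite -big_mkcond big_pred1_eq.
rewrite exchange_big; apply: eq_bigr => w _ /=.
rewrite -big_mkcond sumr_const.
have -> : #|[pred l | w == flip l y]| = (hdist y w == 1%N).
  rewrite (eq_card (B := [pred l | [set k | y k != w k] == [set l]])); last first.
    by move=> l; rewrite !inE flip_eq.
  rewrite /hdist; case E1: (#|[set k | y k != w k]| == 1%N).
    move/cards1P: E1 => [l0 ->].
    rewrite (eq_card (B := pred1 l0)) ?card1 //.
    by move=> l; rewrite !inE; apply/eqP/eqP => [/set1_inj|->].
  apply: eq_card0 => l; rewrite !inE; apply/negP => /eqP E.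
  by move: E1; rewrite E cards1.
by case: (hdist y w == 1%N); rewrite ?mulr0n ?mulr1n.
Qed.

Lemma cnt x w k : #|[set l | hdist x (flip l w) == k]| =
  (if (hdist x w).+1 == k then n - hdist x w
   else if hdist x w == k.+1 then hdist x w else 0)%N.
Proof.
have Hc : #|[set l | x l != w l]| = hdist x w by [].
have Hc' : #|[set l | x l == w l]| = (n - hdist x w)%N.
  have E := cardsC [set l | x l != w l]; rewrite card_ord in E.
  have E2 : #|~: [set l | x l != w l]| = #|[set l | x l == w l]|.
    by apply: eq_card => l; rewrite !inE negbK.
  rewrite -Hc; lia.
case: ifP => [/eqP Ek|Ek].
  rewrite -Hc'; apply: eq_card => l; rewrite !inE hdist_flip.
  rewrite -Ek; case: (x l == w l); rewrite ?eqxx //.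
  by apply/negbTE/eqP; case: (hdist x w) => [|d] /=; lia.
case: ifP => [/eqP Ek2|Ek2].
  rewrite -Hc; apply: eq_card => l; rewrite !inE hdist_flip Ek2.
  case: (x l == w l) => /=; last by apply/eqP.
  by apply/negbTE/eqP; move/eqP: Ek; lia.
apply/eqP; rewrite cards_eq0; apply/eqP/setP => l; rewrite !inE hdist_flip.
case: (x l =P w l) => [_|Hne]; first by rewrite Ek.
have : (0 < hdist x w)%N.
  by rewrite /hdist card_gt0; apply/set0Pn; exists l; rewrite inE; apply/eqP.
move/eqP: Ek2 => Ek2 Hp; apply/negbTE/eqP; lia.
Qed.

End Comb.


Section Main.
Variable n : nat.
Variable f : hvert n -> R.
Hypothesis hker : forall y, f y + \sum_w (if hdist y w == 1%N then f w else 0) = 0.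

Definition Ssum x k := \sum_y (if hdist x y == k then f y else 0).

Lemma S0 x : Ssum x 0 = f x.
Proof.
rewrite /Ssum -big_mkcond (eq_bigl (fun y => y == x)) ?big_pred1_eq //.
by move=> y; rewrite /= hdist0 eq_sym.
Qed.

Lemma S01 x : Ssum x 0 + Ssum x 1 = 0.
Proof. by rewrite S0 hker. Qed.

Lemma per_w x k w :
  \sum_l (if hdist x (flip l w) == k.+1 then f w else 0) =
  (n - k)%:R * (if hdist x w == k then f w else 0) +
  (k.+2)%:R * (if hdist x w == k.+2 then f w else 0).
Proof.
rewrite -big_mkcond sumr_const.
have -> : #|[pred l | hdist x (flip l w) == k.+1]| = #|[set l | hdist x (flip l w) == k.+1]|.
  by apply: eq_card => l; rewrite !inE.
rewrite cnt eqSS.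
case: (hdist x w =P k) => [->|Hk].
  have -> : (k == k.+2) = false by apply/negbTE/eqP; lia.
  by rewrite mulr0 addr0 mulr_natl.
case: (hdist x w =P k.+2) => [->|Hk2].
  by rewrite mulr0 add0r mulr_natl.
by rewrite !mulr0 addr0 mulr0n.
Qed.

Lemma level x k : Ssum x k.+1 + (n - k)%:R * Ssum x k + (k.+2)%:R * Ssum x k.+2 = 0.
Proof.
have E : \sum_y (if hdist x y == k.+1 then f y + \sum_l f (flip l y) else 0) = 0.
  by apply: big1 => y _; case: ifP => // _; rewrite -sum_nbr hker.
rewrite -{}E.
have -> : \sum_y (if hdist x y == k.+1 then f y + \sum_l f (flip l y) else 0) =
  Ssum x k.+1 + \sum_l \sum_y (if hdist x y == k.+1 then f (flip l y) else 0).
  rewrite exchange_big /Ssum -big_split /=; apply: eq_bigr => y _.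
  by case: ifP => _ //; rewrite big1 // addr0.
rewrite -addrA; congr (_ + _).
transitivity (\sum_w \sum_l (if hdist x (flip l w) == k.+1 then f w else 0)).
  under [RHS]eq_bigr do rewrite per_w.
  by rewrite big_split /= -!mulr_sumr.
rewrite [LHS]exchange_big; apply: eq_bigr => l _ /=.
rewrite [RHS](reindex_inj (inv_inj (@flipK n l))) /=.
by apply: eq_bigr => w _; rewrite flipK.
Qed.

End Main.


Lemma binA h j : (j.*2.+2 * 'C(h, j.+1) + 'C(h, j) = (h.*2.+1 - j.*2) * 'C(h, j))%N.
Proof.
case: (leqP j h) => Hj.
  have := mul_bin_left h j; nia.
by rewrite !bin_small //; lia.
Qed.

Lemma binB h j : ((h.*2.+1 - j.*2.+1) * 'C(h, j) + 'C(h, j.+1) = j.*2.+3 * 'C(h, j.+1))%N.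
Proof.
case: (leqP j h) => Hj.
  have := mul_bin_left h j; nia.
by rewrite !bin_small //; lia.
Qed.

Definition e h j := @GRing.mul R ((-1) ^+ j) (('C(h, j))%:R).

Section Closed.
Variable h : nat.
Variable f : hvert h.*2.+1 -> R.
Hypothesis hker : forall y, f y + \sum_w (if hdist y w == 1%N then f w else 0) = 0.

Lemma Sclosed x j : Ssum f x (j.*2) = e h j * f x /\ Ssum f x (j.*2).+1 = - e h j * f x.
Proof.
elim: j => [|j [IH0 IH1]].
  rewrite /= S0 // /e expr0 bin0 mul1r; split; first by rewrite mul1r.
  have := S01 hker x; rewrite S0 // mulN1r addrC => /eqP; rewrite addr_eq0 => /eqP.
  done.
have L1 := level hker x (j.*2).
have L2 := level hker x (j.*2.+1).
set s := @GRing.exp R (-1) j.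
set a := @GRing.natmul R 1 'C(h, j.+1).
set b := @GRing.natmul R 1 'C(h, j).
have B1 := congr1 (fun m => @GRing.natmul R 1 m) (binA h j); rewrite /= natrD !natrM -/a -/b in B1.
have B2 := congr1 (fun m => @GRing.natmul R 1 m) (binB h j); rewrite /= natrD !natrM -/a -/b in B2.
have Ee : e h j = s * b by [].
have Ee1 : e h j.+1 = - (s * a) by rewrite /e exprS mulN1r mulNr.
rewrite doubleS Ee1.
have P2 : Ssum f x j.*2.+2 = - (s * a) * f x.
  apply: (mulfI (x := (j.*2.+2)%:R)); first by rewrite pnatr_eq0.
  move/eqP: L1; rewrite addrC addr_eq0 => /eqP ->.
  rewrite IH0 IH1 Ee.
  have -> : (j.*2.+2)%:R * (- (s * a) * f x) = - (s * f x * ((j.*2.+2)%:R * a)) by ring.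
  have -> : (j.*2.+2)%:R * a = (h.*2.+1 - j.*2)%:R * b - b by rewrite -B1 addrK.
  ring.
split => //.
apply: (mulfI (x := (j.*2.+3)%:R)); first by rewrite pnatr_eq0.
move/eqP: L2; rewrite addrC addr_eq0 => /eqP ->.
rewrite P2 IH1 Ee.
have -> : (j.*2.+3)%:R * (- - (s * a) * f x) = (s * f x * ((j.*2.+3)%:R * a)) by ring.
rewrite -B2; ring.
Qed.

End Closed.


Lemma mulE (n i : nat) (v : 'cV[R]_#|{: hvert n}|) a :
  (distmx n i *m v) a 0 = Ssum (fun y => v (enum_rank y) 0) (enum_val a) i.
Proof.
rewrite mxE (reindex (@enum_rank _)) /=; last by apply: onW_bij; exact: enum_rank_bij.
rewrite /Ssum; apply: eq_bigr => y _; rewrite mxE enum_rankK.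
by case: ifP => _; rewrite ?mul1r ?mul0r.
Qed.

Lemma kerE n i j (v : 'cV[R]_#|{: hvert n}|) :
  in_ker (distmx n i + distmx n j) v <->
  (forall x, Ssum (fun y => v (enum_rank y) 0) x i + Ssum (fun y => v (enum_rank y) 0) x j = 0).
Proof.
have E : forall a, ((distmx n i + distmx n j) *m v) a 0 =
   Ssum (fun y => v (enum_rank y) 0) (enum_val a) i + Ssum (fun y => v (enum_rank y) 0) (enum_val a) j.
  by move=> a; rewrite mulmxDl mxE !mulE.
rewrite /in_ker; split => [H x | H].
  by move/matrixP: H => /(_ (enum_rank x) 0); rewrite E enum_rankK mxE.
by apply/matrixP => a b; rewrite (ord1 b) E H mxE.
Qed.

Lemma e_sym h j : ~~ odd h -> (j <= h)%N -> e h (h - j) = e h j.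
Proof.
move=> Hh Hj; rewrite /e bin_sub //; congr (_ * _).
by rewrite -signr_odd oddB // (negbTE Hh) /= signr_odd.
Qed.

Unset Implicit Arguments. Set Strict Implicit.

Theorem lemma3p8 (n : nat) :
  (odd n ->
     forall i : nat, (i <= (n - 1) %/ 2)%N ->
     forall v : 'cV[R]_(#|{: hvert n}|),
       in_ker (distmx n 0 + distmx n 1) v ->
       in_ker (distmx n (2 * i)%N + distmx n (2 * i + 1)%N) v) /\
  ((n %% 4 = 1)%N ->
     forall i : nat, (i <= (n - 1) %/ 2)%N ->
     forall v : 'cV[R]_(#|{: hvert n}|),
       in_ker (distmx n 0 + distmx n 1) v ->
       in_ker (distmx n i + distmx n (n - i)%N) v).
Proof.
case/boolP: (odd n) => Hodd; last first.
  split => [//|H].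
  exfalso; have H2 : (n %% 2 = 1)%N by lia.
  by move: H2; rewrite modn2; case: (odd n) Hodd.
have Hn := odd_double_half n; rewrite Hodd add1n in Hn.
move: (n./2) Hn => h Hn; subst n.
have hkerE : forall v : 'cV[R]_(#|{: hvert h.*2.+1}|),
    in_ker (distmx h.*2.+1 0 + distmx h.*2.+1 1) v ->
    forall y, (fun y => v (enum_rank y) 0) y +
      \sum_w (if hdist y w == 1%N then (fun y => v (enum_rank y) 0) w else 0) = 0.
  by move=> v /kerE Hv y; have := Hv y; rewrite S0.
split => [_ i Hi v Hv | H4 i Hi v Hv]; have hker := hkerE v Hv; apply/kerE => x.
  have [A B] := Sclosed hker x i.
  by rewrite mul2n addn1 A B mulNr addrN.
have Hh : ~~ odd h.
  have := odd_double_half h; case: (odd h) => //= Hq; exfalso.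
  rewrite -!mul2n in H4 Hq; lia.
have := odd_double_half i; move: (i./2) => j; case: (odd i) => /= Hi'.
  have Hj : (j <= h)%N by rewrite -!mul2n in Hi Hi'; lia.
  have -> : i = (j.*2).+1 by rewrite -!mul2n in Hi' *; lia.
  have -> : (h.*2.+1 - j.*2.+1)%N = (h - j).*2 by rewrite -!mul2n; lia.
  rewrite (Sclosed hker x j).2 (Sclosed hker x (h - j)).1 e_sym //.
  by rewrite mulNr addNr.
have Hj : (j <= h)%N by rewrite -!mul2n in Hi Hi'; lia.
have -> : i = j.*2 by rewrite -!mul2n in Hi' *; lia.
have -> : (h.*2.+1 - j.*2)%N = (h - j).*2.+1 by rewrite -!mul2n; lia.
rewrite (Sclosed hker x j).1 (Sclosed hker x (h - j)).2 e_sym //.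
by rewrite mulNr addrN.
Qed.
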